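(* Let $R_1,R_2$ be discrete valuation domains with maximal ideals $P_1=R_1p_1$ and $P_2=R_2p_2$, let $\overline{R}$ be a field, $\mathcal{V}_i:R_i\to\overline{R}$ surjective ring homomorphisms with $\ker\mathcal{V}_i=P_i$, and $R=\{(r_1,r_2)\in R_1\times R_2:\mathcal{V}_1(r_1)=\mathcal{V}_2(r_2)\}$. Let $S$ be a non-zero separated $R$-module, and let $S_1=S/P_2S$ and $S_2=S/P_1S$. Then $S$ is a pseudo-absorbing primary multiplication $R$-module if and only if $S_1$ is a pseudo-absorbing primary multiplication $R_1$-module and $S_2$ is a pseudo-absorbing primary multiplication $R_2$-module.
   Context: $R$ is local with maximal ideal $P=P_1\oplus P_2=\{(a,b):a\in P_1,b\in P_2\}$. For an $R$-module $S$, $P_1S$ means $(P_1\oplus0)S$ with $P_1\oplus0=\{(a,0):a\in P_1\}$ and $P_2S$ means $(0\oplus P_2)S$ with $0\oplus P_2=\{(0,b):b\in P_2\}$. $S$ is separated if $P_1S\cap P_2S=0$. Since $R/(0\oplus P_2)\cong R_1$ and $R/(P_1\oplus0)\cong R_2$, $S_1=S/P_2S$ is an $R_1$-module and $S_2=S/P_1S$ is an $R_2$-module. A proper ideal $I$ of a commutative ring $A$ is 2-absorbing primary if whenever $a,b,c\in A$ and $abc\in I$ then $ab\in I$ or $ac\in\sqrt I$ or $bc\in\sqrt I$. A proper submodule $N$ of an $A$-module $M$ is pseudo-absorbing primary if $(N:_AM)=\{r\in A:rM\subseteq N\}$ is a 2-absorbing primary ideal of $A$. $M$ is a pseudo-absorbing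 primary multiplication $A$-module if for every pseudo-absorbing primary submodule $N$ of $M$ there is an ideal $I$ of $A$ with $N=IM$. *)

(* Defs.v *)
From HB Require Import structures.
From mathcomp Require Import all_boot all_order all_algebra.
Set Implicit Arguments. Unset Strict Implicit. Unset Printing Implicit Defensive.
Import Order.TTheory GRing.Theory Num.Theory.
Local Open Scope ring_scope.

Section RingNotions.
Variable A : comNzRingType.

Definition is_ideal (I : A -> Prop) : Prop :=
  [/\ I 0, (forall x y, I x -> I y -> I (x + y)) & (forall r x, I x -> I (r * x))].

Definition proper_ideal (I : A -> Prop) : Prop := is_ideal I /\ ~ I 1.

Definition rad (I : A -> Prop) : A -> Prop := fun r => exists n : nat, I (r ^+ n).

Definition two_absorbing_primary (I : A -> Prop) : Prop :=
  proper_ideal I /\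
  forall a b c, I (a * b * c) -> [\/ I (a * b), rad I (a * c) | rad I (b * c)].

Definition principal (p : A) : A -> Prop := fun x => exists y, x = y * p.

Definition maximal_ideal (M : A -> Prop) : Prop :=
  proper_ideal M /\
  forall J, is_ideal J -> (forall x, M x -> J x) -> (forall x, J x <-> M x) \/ J 1.
End RingNotions.

Definition is_PID (D : idomainType) : Prop :=
  forall I : D -> Prop, is_ideal I -> exists a : D, forall x, I x <-> principal a x.

Definition is_DVD (D : idomainType) : Prop :=
  [/\ is_PID D,
      (exists M : D -> Prop, maximal_ideal M /\ exists x, M x /\ x != 0) &
      (forall M M' : D -> Prop, maximal_ideal M -> maximal_ideal M' ->
         forall x, M x <-> M' x)].

Section ModuleNotions.
Variables (A : comNzRingType) (M : lmodType A).

Definition is_submodule (N : M -> Prop) : Prop :=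
  [/\ N 0, (forall x y, N x -> N y -> N (x + y)) & (forall (r : A) x, N x -> N (r *: x))].

Definition proper_submodule (N : M -> Prop) : Prop :=
  is_submodule N /\ exists m, ~ N m.

Definition colon (N : M -> Prop) : A -> Prop := fun r => forall m : M, N (r *: m).

Definition idealmul (I : A -> Prop) : M -> Prop :=
  fun x => exists (n : nat) (r : 'I_n -> A) (m : 'I_n -> M),
    (forall i, I (r i)) /\ x = \sum_(i < n) r i *: m i.

Definition pseudo_absorbing_primary (N : M -> Prop) : Prop :=
  proper_submodule N /\ two_absorbing_primary (colon N).

Definition pap_multiplication_module : Prop :=
  forall N : M -> Prop, pseudo_absorbing_primary N ->
    exists I : A -> Prop, is_ideal I /\ forall x, N x <-> idealmul I x.
End ModuleNotions.

Arguments pap_multiplication_module A M : clear implicits.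

Section Pullback.
Variables (R1 R2 : comNzRingType) (F : fieldType)
          (V1 : {rmorphism R1 -> F}) (V2 : {rmorphism R2 -> F}).

Definition pb_pred : {pred R1 * R2} := fun x => V1 x.1 == V2 x.2.

Fact pb_closed : subring_closed pb_pred.
Proof.
split; rewrite /pb_pred /in_mem /=.
- by rewrite !rmorph1.
- move=> [x1 x2] [y1 y2] /eqP /= e1 /eqP /= e2.
  by apply/eqP; rewrite /= !rmorphB e1 e2.
- move=> [x1 x2] [y1 y2] /eqP /= e1 /eqP /= e2.
  by apply/eqP; rewrite /= !rmorphM e1 e2.
Qed.

HB.instance Definition _ := GRing.isSubringClosed.Build _ pb_pred pb_closed.

Record pullback := Pullback { pbval : R1 * R2; _ : pbval \in pb_pred }.
HB.instance Definition _ := [isSub for pbval].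
HB.instance Definition _ := [Choice of pullback by <:].
HB.instance Definition _ := [SubChoice_isSubComNzRing of pullback by <:].

Definition P1_0 (p1 : R1) : pullback -> Prop :=
  fun r => principal p1 (pbval r).1 /\ (pbval r).2 = 0.
Definition O_P2 (p2 : R2) : pullback -> Prop :=
  fun r => (pbval r).1 = 0 /\ principal p2 (pbval r).2.
End Pullback.
Arguments P1_0 {R1 R2 F} V1 V2 p1.
Arguments O_P2 {R1 R2 F} V1 V2 p2.

Definition separated (R1 R2 : comNzRingType) (F : fieldType)
  (V1 : {rmorphism R1 -> F}) (V2 : {rmorphism R2 -> F}) (p1 : R1) (p2 : R2)
  (S : lmodType (pullback V1 V2)) : Prop :=
  forall x : S, idealmul (P1_0 V1 V2 p1) x -> idealmul (O_P2 V1 V2 p2) x -> x = 0.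

(* pi : S -> T presents T (a B-module) as the quotient S / N, where the
   pullback acts on T through the ring map act : pullback -> B. *)
Definition quotient_presentation (A B : comNzRingType) (act : A -> B)
  (S : lmodType A) (T : lmodType B) (N : S -> Prop) (pi : S -> T) : Prop :=
  [/\ (forall x y, pi (x + y) = pi x + pi y),
      (forall t, exists x, pi x = t),
      (forall x, pi x = 0 <-> N x) &
      (forall (a : A) x, pi (a *: x) = act a *: pi x)].
Arguments quotient_presentation {A B} act S T N pi.
Arguments separated {R1 R2 F V1 V2} p1 p2 S.

(* Main.v *)
Require Import Defs.
From HB Require Import structures.
From mathcomp Require Import all_boot all_order all_algebra.
From mathcomp Require Import ring.
From Stdlib Require Import Classical ClassicalEpsilon.
Import GRing.Theory.
Local Open Scope ring_scope.


Lemma sum_in (V : nmodType) (P : V -> Prop) n (F : 'I_n -> V) :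
  P 0 -> (forall x y, P x -> P y -> P (x + y)) -> (forall i, P (F i)) ->
  P (\sum_(i < n) F i).
Proof. by move=> P0 PD PF; apply: big_ind. Qed.

Section DVD.
Variables (D : idomainType) (p : D).
Hypotheses (hD : is_DVD D) (hp : maximal_ideal (principal p)).

Lemma principal_ideal (a : D) : is_ideal (principal a).
Proof.
split.
- by exists 0; rewrite mul0r.
- by move=> x y [u ->] [v ->]; exists (u + v); rewrite mulrDl.
- by move=> r x [u ->]; exists (r * u); rewrite mulrA.
Qed.

Lemma PID_D : is_PID D. Proof. by case: hD. Qed.

Lemma p_not1 : ~ principal p 1. Proof. by case: hp => [[]]. Qed.

Lemma uniqM (M : D -> Prop) : maximal_ideal M -> forall x, M x <-> principal p x.
Proof. by case: hD => _ _ hu hM; apply: hu. Qed.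

Lemma p_neq0 : p != 0.
Proof.
case: hD => _ [M [hM [x [Mx x0]]]] _.
apply/negP => /eqP p0; move: Mx; rewrite (uniqM _ hM) => -[y e].
by move: x0; rewrite e p0 mulr0 eqxx.
Qed.

Lemma max_prop (a : D) : ~ principal p a -> exists d e, 1 = d * a + e * p.
Proof.
move=> ha.
pose J := fun z => exists d e, z = d * a + e * p.
have hJ : is_ideal J.
  split.
  - by exists 0, 0; rewrite !mul0r addr0.
  - move=> x y [d [e ->]] [d' [e' ->]]; exists (d + d'), (e + e').
    by rewrite !mulrDl addrACA.
  - move=> r x [d [e ->]]; exists (r * d), (r * e).
    by rewrite mulrDr !mulrA.
case: hp => _ /(_ J hJ) [].
- by move=> x [y ->]; exists 0, y; rewrite mul0r add0r.
- by move=> /(_ a) [] /(_ _) => h _; exfalso; apply: ha; apply: h; exists 1, 0; rewrite mul1r mul0r addr0.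
- by [].
Qed.

Definition unitP (u : D) := exists v, v * u = 1.

Lemma loc (u : D) : ~ principal p u -> unitP u.
Proof.
move=> hu; apply: NNPP => hnu.
have H : forall t, ~ unitP t -> principal t u ->
    exists c, ~ unitP c /\ principal c t /\ ~ principal t c.
  move=> t ht htu; apply: NNPP => hne.
  have Mt : maximal_ideal (principal t).
    split.
      split; first exact: principal_ideal.
      by case=> y e; apply: ht; exists y; rewrite -e.
    move=> J hJ sub; case: (PID_D _ hJ) => c hc.
    have tc : principal c t by apply/hc/sub; exists 1; rewrite mul1r.
    case: (classic (principal t c)) => ct.
    - left => x; split.
      + by move/hc => [y ->]; case: ct => z ->; exists (y * z); rewrite mulrA.
      + by move/sub.
    - right; apply/hc.
      have [v hv] : unitP c.
        apply: NNPP => hc'; apply: hne; exists c; split => //.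
      by exists v.
  by apply: hu; apply/(uniqM _ Mt).
have Hf : forall t, exists c, (~ unitP t /\ principal t u) ->
    (~ unitP c /\ principal c t /\ ~ principal t c).
  move=> t; case: (classic (~ unitP t /\ principal t u)) => [[h1 h2]|h].
  - by case: (H t h1 h2) => c hc; exists c.
  - by exists t.
pose f t := proj1_sig (constructive_indefinite_description _ (Hf t)).
have hfP t : _ := proj2_sig (constructive_indefinite_description _ (Hf t)).
pose y n := iter n f u.
have inv : forall n, ~ unitP (y n) /\ principal (y n) u.
  elim => [|n [ih1 ih2]]; first by split => //; exists 1; rewrite mul1r.
  have [a1 [a2 a3]] := hfP (y n) (conj ih1 ih2).
  split; first exact: a1.
  case: ih2 => z ez; case: a2 => w ew.
  by exists (z * w); rewrite ez /= -mulrA -ew.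
have step n : principal (y n.+1) (y n) /\ ~ principal (y n) (y n.+1).
  by have [a1 [a2 a3]] := hfP (y n) (inv n); split.
have mono : forall n m, (n <= m)%N -> forall z, principal (y n) z -> principal (y m) z.
  move=> n; elim => [|m ih] hnm z hz.
    by move: hnm; rewrite leqn0 => /eqP e; rewrite -e.
  move: hnm; rewrite leq_eqVlt => /orP [/eqP e|hlt]; first by rewrite -e.
  case: (ih hlt z hz) => a ea; case: (step m).1 => w ew.
  by exists (a * w); rewrite ea ew mulrA.
pose U z := exists n, principal (y n) z.
have UI : is_ideal U.
  split.
  - by exists 0%N; exists 0; rewrite mul0r.
  - move=> a b [n ha] [m hb]; exists (maxn n m).
    case: (principal_ideal (y (maxn n m))) => _ hadd _; apply: hadd.
      by apply: (mono n) => //; rewrite leq_maxl.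
    by apply: (mono m) => //; rewrite leq_maxr.
  - move=> r x [n hx]; exists n.
    by case: (principal_ideal (y n)) => _ _ hm; apply: hm.
case: (PID_D _ UI) => b hb.
have [n [z hbn]] : U b by apply/hb; exists 1; rewrite mul1r.
have [w ew] : principal b (y n.+1) by apply/hb; exists n.+1; exists 1; rewrite mul1r.
apply: (step n).2; exists (w * z); by rewrite ew hbn mulrA.
Qed.

Lemma val_dec (y : D) : y != 0 -> exists n u, y = p ^+ n * u /\ unitP u.
Proof.
move=> y0.
suff [n [u [e hu]]] : exists n u, y = p ^+ n * u /\ ~ principal p u.
  by exists n, u; split => //; apply: loc.
apply: NNPP => hne.
have all : forall n, exists w, y = p ^+ n * w.
  elim=> [|n [w hw]]; first by exists y; rewrite expr0 mul1r.
  case: (classic (principal p w)) => [[c hc]|hw'].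
    by exists c; rewrite hw hc exprS; ring.
  by exfalso; apply: hne; exists n, w.
pose U z := exists n w, p ^+ n * z = w * y.
have UI : is_ideal U.
  split.
  - by exists 0%N, 0; rewrite mulr0 mul0r.
  - move=> z1 z2 [n1 [w1 h1]] [n2 [w2 h2]].
    exists (n1 + n2)%N, (p ^+ n2 * w1 + p ^+ n1 * w2).
    have e1 : p ^+ (n1 + n2) * z1 = p ^+ n2 * (p ^+ n1 * z1) by rewrite exprD; ring.
    have e2 : p ^+ (n1 + n2) * z2 = p ^+ n1 * (p ^+ n2 * z2) by rewrite exprD; ring.
    by rewrite mulrDr e1 e2 h1 h2; ring.
  - move=> r z [n [w h]]; exists n, (r * w).
    by rewrite mulrCA h mulrA.
case: (PID_D _ UI) => b hb.
have [t et] : principal b y by apply/hb; exists 0%N, 1; rewrite expr0 !mul1r.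
have [n [w hbw]] : U b by apply/hb; exists 1; rewrite mul1r.
have [y' hy] := all n.+1.
have [d hy'] : principal b y' by apply/hb; exists n.+1, 1; rewrite mul1r hy.
have E : p ^+ n * b * (w * p * d) = w * (p ^+ n.+1 * (d * b)) by rewrite exprS; ring.
have Z : p ^+ n * b * (1 - w * p * d) = 0.
  by rewrite mulrBr mulr1 E -hy' -hy -hbw subrr.
move: Z => /eqP; rewrite !mulf_eq0 expf_eq0 (negPf p_neq0) andbF /=.
case/orP => /eqP.
- by move=> b0; move: y0; rewrite et b0 mulr0 eqxx.
- move=> /eqP; rewrite subr_eq0 => /eqP e; apply: p_not1.
  by exists (w * d); rewrite e; ring.
Qed.

Lemma G (J : D -> Prop) : is_ideal J -> ~ J 1 -> two_absorbing_primary J.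
Proof.
move=> hJ hJ1; split; first by split.
case: hJ => J0 JD JM.
have JR : forall z, J z -> Defs.rad J z by move=> z hz; exists 1%N; rewrite expr1.
move=> a b c habc.
case: (classic (forall x, J x -> x = 0)) => [J0' | ].
  move: (J0' _ habc) => /eqP; rewrite !mulf_eq0 => /orP [/orP [/eqP e|/eqP e]|/eqP e].
  - by constructor 1; rewrite e mul0r.
  - by constructor 1; rewrite e mulr0.
  - by constructor 2; apply: JR; rewrite e mulr0.
move=> hh; have [a0 hna0] := not_all_ex_not _ _ hh; have [Ja0 a00] := imply_to_and _ _ hna0.
have [n [u [ea [v hv]]]] := val_dec a0 (introN eqP a00).
have Jpn : J (p ^+ n).
  by have := JM v _ Ja0; rewrite ea mulrCA hv mulr1.
have radp : forall z, principal p z -> Defs.rad J z.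
  move=> z [y ->]; exists n; rewrite exprMn; exact: JM.
have dich : forall z, principal p z \/ unitP z.
  by move=> z; case: (classic (principal p z)) => h; [left | right; apply: loc].
case: (dich c) => [[yc ec] | [vc hvc]].
- case: (dich a) => [[ya ea'] | [va hva]].
  + constructor 2; apply: radp; exists (ya * c); rewrite ea'; ring.
  + case: (dich b) => [[yb eb] | [vb hvb]].
    * constructor 3; apply: radp; exists (yb * c); rewrite eb; ring.
    * constructor 3; apply: JR.
      have -> : b * c = va * (a * b * c) by rewrite -[LHS]mul1r -hva; ring.
      exact: JM.
- constructor 1.
  have -> : a * b = vc * (a * b * c) by rewrite -[LHS]mul1r -hvc; ring.
  exact: JM.
Qed.

Variable M : lmodType D.

Lemma colon_ideal (N : M -> Prop) : is_submodule N -> (exists m, ~ N m) ->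
  is_ideal (colon N) /\ ~ colon N 1.
Proof.
case=> N0 ND NZ [m hm]; split.
  split; rewrite /colon.
  - by move=> x; rewrite scale0r.
  - by move=> a b ha hb x; rewrite scalerDl; apply: ND.
  - by move=> r a ha x; rewrite -scalerA; apply: NZ.
by move=> h; apply: hm; have := h m; rewrite scale1r.
Qed.

Lemma pap_sub : pap_multiplication_module D M -> forall N : M -> Prop, is_submodule N ->
  (exists m, ~ N m) -> exists I : D -> Prop, is_ideal I /\ forall x, N x <-> idealmul I x.
Proof.
move=> h N hN hm; apply: h; split; first by split.
by case: (colon_ideal _ hN hm) => hi h1; apply: G.
Qed.

Lemma cyc_sub (x : M) : is_submodule (fun m => exists d, m = d *: x).
Proof.
split.
- by exists 0; rewrite scale0r.
- by move=> a b [d ->] [e ->]; exists (d + e); rewrite scalerDl.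
- by move=> r a [d ->]; exists (r * d); rewrite scalerA.
Qed.

Lemma pow_div (hdiv : forall m : M, exists m', m = p *: m') n (m : M) :
  exists m' : M, m = p ^+ n *: m'.
Proof.
elim: n m => [|n ih] m; first by exists m; rewrite expr0 scale1r.
case: (ih m) => m1 e1; case: (hdiv m1) => m2 e2.
by exists m2; rewrite e1 e2 scalerA -exprSr.
Qed.

Lemma L1 : pap_multiplication_module D M ->
  (forall m : M, exists m', m = p *: m') -> forall x : M, x = 0.
Proof.
move=> h hdiv x; apply: NNPP => hx0.
case: (classic (forall m, exists d, m = d *: x)) => [hall | hnot].
- case: (hdiv x) => m' e; case: (hall m') => d e'.
  have [v hv] : unitP (1 - p * d).
    apply: loc => -[y hy]; apply: p_not1.
    by exists (y + d); rewrite mulrDl -hy; ring.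
  have h0 : (1 - p * d) *: x = 0.
    by rewrite scalerBl scale1r {1}e e' scalerA subrr.
  by apply: hx0; rewrite -[x]scale1r -hv -scalerA h0 scaler0.
- have [m hm] := not_all_ex_not _ _ hnot.
  case: (pap_sub h _ (cyc_sub x) (ex_intro _ m hm)) => I [hI hN].
  have : idealmul I x by apply/hN; exists 1; rewrite scale1r.
  case: (classic (forall a, I a -> a = 0)) => [I0 | hI0].
  + move=> [n [r [mm [hr ex]]]]; apply: hx0; rewrite ex.
    by apply: big1 => i _; rewrite (I0 _ (hr i)) scale0r.
  + move=> _; have [a ha] := not_all_ex_not _ _ hI0.
    have [Ia a0] := imply_to_and _ _ ha.
    have [n [u [ea [v hv]]]] := val_dec a (introN eqP a0).
    apply: hm; apply/hN.
    case: (pow_div hdiv n m) => m'' e.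
    exists 1%N, (fun _ => a), (fun _ => v *: m''); split => //.
    by rewrite big_ord1 scalerA ea -mulrA [u * v]mulrC hv mulr1.
Qed.

Lemma L2 (x : M) : pap_multiplication_module D M -> ~ (exists m', x = p *: m') ->
  forall m, exists d, m = d *: x.
Proof.
move=> h hx; apply: NNPP => hnot.
have [m hm] := not_all_ex_not _ _ hnot.
case: (pap_sub h _ (cyc_sub x) (ex_intro _ m hm)) => I [hI hN].
have : idealmul I x by apply/hN; exists 1; rewrite scale1r.
case: (classic (forall a, I a -> principal p a)) => [Ip | hIp].
- move=> [n [r [mm [hr ex]]]]; apply: hx; rewrite ex.
  apply: (@sum_in _ (fun z => exists m', z = p *: m')).
  + by exists 0; rewrite scaler0.
  + by move=> a b [m1 ->] [m2 ->]; exists (m1 + m2); rewrite scalerDr.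
  + move=> i; case: (Ip _ (hr i)) => y ->.
    by exists (y *: mm i); rewrite !scalerA mulrC.
- move=> _; have [a ha] := not_all_ex_not _ _ hIp.
  have [Ia a0] := imply_to_and _ _ ha.
  have [v hv] := loc a a0.
  apply: hm; apply/hN.
  exists 1%N, (fun _ => a), (fun _ => v *: m); split => //.
  by rewrite big_ord1 scalerA mulrC hv scale1r.
Qed.

End DVD.

Lemma mk (R1 R2 : comNzRingType) (F : fieldType) (V1 : {rmorphism R1 -> F})
  (V2 : {rmorphism R2 -> F}) (r1 : R1) (r2 : R2) :
  V1 r1 = V2 r2 -> exists r : pullback V1 V2, pbval r = (r1, r2).
Proof.
move=> e; have h : (r1, r2) \in pb_pred V1 V2 by rewrite /in_mem /= /pb_pred /= e.
by exists (Pullback h).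
Qed.

Lemma cyc_pap (A : comNzRingType) (M : lmodType A) (s0 : M) :
  (forall s, exists r, s = r *: s0) -> pap_multiplication_module A M.
Proof.
move=> hgen N [[[N0 ND NZ] _] _].
exists (fun r => N (r *: s0)); split.
  split.
  - by rewrite scale0r.
  - by move=> a b ha hb; rewrite scalerDl; apply: ND.
  - by move=> r a ha; rewrite -scalerA; apply: NZ.
move=> x; split.
- move=> hx; case: (hgen x) => r er.
  exists 1%N, (fun _ => r), (fun _ => s0); split; first by move=> _; rewrite -er.
  by rewrite big_ord1.
- move=> [n [r [m [hr ->]]]].
  apply: (@sum_in _ N) => // i.
  case: (hgen (m i)) => c ->.
  by rewrite scalerA mulrC -scalerA; apply: NZ.
Qed.

Section Quot.
Variables (A B : comNzRingType) (act : A -> B) (S : lmodType A) (T : lmodType B)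
  (N0 : S -> Prop) (pi : S -> T).
Hypothesis hq : quotient_presentation act S T N0 pi.

Lemma pi0 : pi 0 = 0.
Proof.
case: hq => hadd _ _ _.
by apply/(addrI (pi 0)); rewrite -hadd !addr0.
Qed.

Lemma piN x : pi (- x) = - pi x.
Proof.
case: hq => hadd _ _ _.
by apply/(addrI (pi x)); rewrite -hadd !subrr pi0.
Qed.

Lemma piB x y : pi (x - y) = pi x - pi y.
Proof. by case: hq => hadd _ _ _; rewrite hadd piN. Qed.

Lemma pi_sum n (F : 'I_n -> S) : pi (\sum_(i < n) F i) = \sum_(i < n) pi (F i).
Proof.
case: hq => hadd _ _ _.
elim: n F => [|n ih] F; first by rewrite !big_ord0 pi0.
by rewrite !big_ord_recr /= hadd ih.
Qed.

Lemma ker_div (J : A -> Prop) (p : B) :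
  (forall a, J a -> principal p (act a)) ->
  forall x, idealmul J x -> exists m', pi x = p *: m'.
Proof.
case: hq => hadd _ _ hscale.
move=> hJ x [n [r [m [hr ->]]]]; rewrite pi_sum.
apply: (@sum_in _ (fun z => exists m', z = p *: m')).
- by exists 0; rewrite scaler0.
- by move=> a b [m1 ->] [m2 ->]; exists (m1 + m2); rewrite scalerDr.
- move=> i; rewrite hscale; case: (hJ _ (hr i)) => y ->.
  by exists (y *: pi (m i)); rewrite scalerA mulrC.
Qed.

Hypotheses (actM : forall a b, act (a * b) = act a * act b)
  (actD : forall a b, act (a + b) = act a + act b)
  (act1 : act 1 = 1) (act_surj : forall b, exists a, act a = b).

Lemma act0 : act 0 = 0.
Proof. by apply/(addrI (act 0)); rewrite -actD !addr0. Qed.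

Lemma actX r n : act (r ^+ n) = act r ^+ n.
Proof. by elim: n => [|n ih]; rewrite ?expr0 ?act1 // !exprS actM ih. Qed.

Lemma pap_quot : pap_multiplication_module A S -> pap_multiplication_module B T.
Proof.
move=> hS N1 [[[N10 N1D N1Z] [m1 hm1]] [[[C0 CD CM] C1] C2]].
case: hq => hadd hsurj hker hscale.
pose N := fun x => N1 (pi x).
have hcol : forall r, colon N r <-> colon N1 (act r).
  move=> r; split => h t.
  - by case: (hsurj t) => x <-; have := h x; rewrite /N hscale.
  - by rewrite /N hscale; apply: h.
have hNsub : is_submodule N.
  split; rewrite /N.
  - by rewrite pi0.
  - by move=> x y hx hy; rewrite hadd; apply: N1D.
  - by move=> r x hx; rewrite hscale; apply: N1Z.
have hNprop : exists m, ~ N m.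
  by case: (hsurj m1) => x ex; exists x; rewrite /N ex.
have hcolN : two_absorbing_primary (colon N).
  split.
    split.
      split.
      - by apply/hcol; rewrite act0.
      - by move=> a b /hcol ha /hcol hb; apply/hcol; rewrite actD; apply: CD.
      - by move=> r a /hcol ha; apply/hcol; rewrite actM; apply: CM.
    by move/hcol; rewrite act1.
  move=> a b c /hcol; rewrite !actM => /C2 [h|[n h]|[n h]].
  - by constructor 1; apply/hcol; rewrite actM.
  - by constructor 2; exists n; apply/hcol; rewrite actX actM.
  - by constructor 3; exists n; apply/hcol; rewrite actX actM.
case: (hS N (conj (conj hNsub hNprop) hcolN)) => I [[I0 ID IM] hNI].
exists (fun b => exists a, I a /\ act a = b); split.
  split.
  - by exists 0; rewrite act0.
  - by move=> x y [a [ha <-]] [b [hb <-]]; exists (a + b); rewrite actD; split => //; apply: ID.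
  - move=> r x [a [ha <-]]; case: (act_surj r) => r' <-.
    by exists (r' * a); rewrite actM; split => //; apply: IM.
move=> t; split.
- move=> ht; case: (hsurj t) => x ex.
  have : N x by rewrite /N ex.
  move/hNI => [n [r [m [hr exx]]]].
  exists n, (fun i => act (r i)), (fun i => pi (m i)); split.
    by move=> i; exists (r i).
  rewrite -ex exx pi_sum; apply: eq_bigr => i _; by rewrite hscale.
- move=> [n [r [m [hr ->]]]].
  have hc : forall i, exists am : A * S, I am.1 /\ act am.1 = r i /\ pi am.2 = m i.
    move=> i; case: (hr i) => a [ha ea]; case: (hsurj (m i)) => x ex.
    by exists (a, x).
  pose g i := proj1_sig (constructive_indefinite_description _ (hc i)).
  have hg i : _ := proj2_sig (constructive_indefinite_description _ (hc i)).
  have : N (\sum_(i < n) (g i).1 *: (g i).2).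
    apply/hNI; exists n, (fun i => (g i).1), (fun i => (g i).2); split => //.
    by move=> i; case: (hg i).
  rewrite /N pi_sum.
  have -> : \sum_(i < n) r i *: m i = \sum_(i < n) pi ((g i).1 *: (g i).2) by
    apply: eq_bigr => i _; rewrite hscale; case: (hg i) => _ [-> ->].
  by [].
Qed.

End Quot.
Arguments mk {R1 R2 F V1 V2 r1 r2} _.
Arguments L1 {D p} hD hp {M} _ _ x.
Arguments L2 {D p} hD hp {M x} _ _ m.

Theorem theorem3p2
  (R1 R2 : idomainType) (Rbar : fieldType) (p1 : R1) (p2 : R2)
  (V1 : {rmorphism R1 -> Rbar}) (V2 : {rmorphism R2 -> Rbar})
  (S : lmodType (pullback V1 V2)) (S1 : lmodType R1) (S2 : lmodType R2)
  (pi1 : S -> S1) (pi2 : S -> S2) :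
  is_DVD R1 -> maximal_ideal (principal p1) ->
  is_DVD R2 -> maximal_ideal (principal p2) ->
  (forall y, exists x, V1 x = y) -> (forall y, exists x, V2 x = y) ->
  (forall x, V1 x = 0 <-> principal p1 x) ->
  (forall x, V2 x = 0 <-> principal p2 x) ->
  (exists s : S, s != 0) ->
  separated p1 p2 S ->
  (* S1 = S / P2 S  and  S2 = S / P1 S *)
  quotient_presentation (fun r : pullback V1 V2 => (pbval r).1) S S1
    (idealmul (O_P2 V1 V2 p2)) pi1 ->
  quotient_presentation (fun r : pullback V1 V2 => (pbval r).2) S S2
    (idealmul (P1_0 V1 V2 p1)) pi2 ->
  (pap_multiplication_module (pullback V1 V2) S <->
     pap_multiplication_module R1 S1 /\ pap_multiplication_module R2 S2).
Proof.
move=> hD1 hp1 hD2 hp2 sV1 sV2 k1 k2 [s hs] hsep hq1 hq2.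
have hq1' := hq1; have hq2' := hq2.
case: hq1' => hadd1 hsurj1 hk1 hscale1.
case: hq2' => hadd2 hsurj2 hk2 hscale2.
split.
  move=> hS; split.
  - apply: (@pap_quot _ _ _ _ _ _ _ hq1) => //.
    move=> b; case: (sV2 (V1 b)) => x2 e.
    by case: (mk (esym e)) => r er; exists r; rewrite er.
  - apply: (@pap_quot _ _ _ _ _ _ _ hq2) => //.
    move=> b; case: (sV1 (V2 b)) => x1 e.
    by case: (mk e) => r er; exists r; rewrite er.
move=> [h1 h2].
have inj : forall x y, pi1 x = pi1 y -> pi2 x = pi2 y -> x = y.
  move=> x y e1 e2; apply/eqP; rewrite -subr_eq0; apply/eqP; apply: hsep.
  - by apply/hk2; rewrite (@piB _ _ _ _ _ _ _ hq2) e2 subrr.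
  - by apply/hk1; rewrite (@piB _ _ _ _ _ _ _ hq1) e1 subrr.
have kd2 : forall x, pi1 x = 0 -> exists m', pi2 x = p2 *: m'.
  move=> x /hk1; apply: (@ker_div _ _ _ _ _ _ _ hq2).
  by move=> a [_ h].
have kd1 : forall x, pi2 x = 0 -> exists m', pi1 x = p1 *: m'.
  move=> x /hk2; apply: (@ker_div _ _ _ _ _ _ _ hq1).
  by move=> a [h _].
have s0ne : forall (z1 : forall t : S1, t = 0) (z2 : forall t : S2, t = 0), False.
  move=> z1 z2; move: hs; have -> : s = 0 by apply: inj; rewrite ?z1 ?z2 ?(z1 (pi1 0)) ?(z2 (pi2 0)).
  by rewrite eqxx.
have stepb1 : exists a, ~ (exists m', pi1 a = p1 *: m').
  apply: NNPP => hno.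
  have d1 : forall t : S1, exists m', t = p1 *: m'.
    by move=> t; case: (hsurj1 t) => x <-; apply: NNPP => hx; apply: hno; exists x.
  have z1 := L1 hD1 hp1 h1 d1.
  have d2 : forall t : S2, exists m', t = p2 *: m'.
    move=> t; case: (hsurj2 t) => x <-.
    by case: (kd2 x (z1 _)) => m' ->; exists m'.
  exact: (s0ne z1 (L1 hD2 hp2 h2 d2)).
have stepb2 : exists a, ~ (exists m', pi2 a = p2 *: m').
  apply: NNPP => hno.
  have d2 : forall t : S2, exists m', t = p2 *: m'.
    by move=> t; case: (hsurj2 t) => x <-; apply: NNPP => hx; apply: hno; exists x.
  have z2 := L1 hD2 hp2 h2 d2.
  have d1 : forall t : S1, exists m', t = p1 *: m'.
    move=> t; case: (hsurj1 t) => x <-.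
    by case: (kd1 x (z2 _)) => m' ->; exists m'.
  exact: (s0ne (L1 hD1 hp1 h1 d1) z2).
have [s0 [hs1 hs2]] : exists s0, ~ (exists m', pi1 s0 = p1 *: m') /\
    ~ (exists m', pi2 s0 = p2 *: m').
  case: stepb1 => a ha; case: stepb2 => b hb.
  case: (classic (exists m', pi2 a = p2 *: m')) => [[ma ea]|ha2]; last by exists a.
  case: (classic (exists m', pi1 b = p1 *: m')) => [[mb eb]|hb1]; last by exists b.
  exists (a + b); split.
  - move=> [m' e]; apply: ha; exists (m' - mb).
    by rewrite scalerBr -e -eb hadd1 addrK.
  - move=> [m' e]; apply: hb; exists (m' - ma).
    by rewrite scalerBr -e -ea hadd2 [pi2 a + _]addrC addrK.
have gen1 := L2 hD1 hp1 h1 hs1.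
have gen2 := L2 hD2 hp2 h2 hs2.
have Vp2 : V2 p2 = 0 by apply/k2; exists 1; rewrite mul1r.
apply: (@cyc_pap _ _ s0) => x.
case: (gen1 (pi1 x)) => r1 e1.
case: (sV2 (V1 r1)) => r2' er2'.
have [r hr] := mk (esym er2').
have ht1 : pi1 (x - r *: s0) = 0 by rewrite (@piB _ _ _ _ _ _ _ hq1) hscale1 /= hr /= -e1 subrr.
have [m' em'] := kd2 _ ht1.
case: (gen2 m') => e ee.
have hV : V1 r1 = V2 (r2' + p2 * e) by rewrite rmorphD rmorphM Vp2 mul0r addr0 er2'.
have [r' hr'] := mk hV.
exists r'; apply: inj.
- by rewrite hscale1 /= hr' /=.
- rewrite hscale2 /= hr' /= scalerDl -scalerA -ee -em' (@piB _ _ _ _ _ _ _ hq2) hscale2 /= hr /=.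
  by rewrite addrC subrK.
Qed.
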